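(* Let $X$ be a nodal toric Fano threefold and $\widetilde{X}\to X$ a small crepant toric resolution. Then there is an exact sequence $$0\longrightarrow\operatorname{Pic}(X)\longrightarrow\operatorname{Pic}(\widetilde{X})\xrightarrow{\ \phi\ }\bigoplus_{ABCD}\mathbb{Z},$$ where the sum runs over all quadrangular faces $\rho_A\rho_B\rho_C\rho_D$ (vertices in cyclic order) of the fan polytope of $X$, $\phi=\oplus_{ABCD}\phi_{ABCD}$, and $\phi_{ABCD}\big(\sum_\rho a_\rho D_\rho\big)=a_{\rho_A}-a_{\rho_B}+a_{\rho_C}-a_{\rho_D}$.
   Context: The fan polytope is the convex hull of the primitive ray generators; quadrangular faces correspond to the nodes of $X$. $D_\rho$ is the torus-invariant prime divisor of the ray $\rho$; since the resolution is small, torus-invariant Weil divisors on $X$ and $\widetilde{X}$ are identified, and $\operatorname{Pic}(X)\to\operatorname{Pic}(\widetilde{X})$ is pullback. *)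

(* Defs.v *)
From HB Require Import structures.
From mathcomp Require Import all_boot all_order all_algebra.
Set Implicit Arguments. Unset Strict Implicit. Unset Printing Implicit Defensive.
Import Order.TTheory GRing.Theory Num.Theory.
Local Open Scope ring_scope.

(* Lattice N = Z^3 as row vectors 'rV[int]_3; M = Z^3 dual lattice. *)
Definition dotZ (m x : 'rV[int]_3) : int := \sum_(k < 3) m 0 k * x 0 k.
Definition toQ (x : 'rV[int]_3) : 'rV[rat]_3 := map_mx (fun z : int => z%:~R) x.
Definition dotQ (u : 'rV[rat]_3) (x : 'rV[int]_3) : rat :=
  \sum_(k < 3) u 0 k * (x 0 k)%:~R.

Definition det3 (a b c : 'rV[int]_3) : int :=
  \det (\matrix_(i < 3, k < 3) ([:: a; b; c]`_i) 0 k).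

Definition primitive (x : 'rV[int]_3) : Prop :=
  forall d : int, (forall k : 'I_3, (d %| x ord0 k)%Z) -> `|d| = 1.

Section Fan.
Variables (n : nat) (v : 'I_n -> 'rV[int]_3).

Definition is_vertex (i : 'I_n) : Prop :=
  ~ exists lam : 'I_n -> rat,
      [/\ forall j, 0 <= lam j, lam i = 0, \sum_j lam j = 1
        & \sum_j lam j *: toQ (v j) = toQ (v i)].

Definition zero_interior : Prop :=
  forall u : 'rV[rat]_3, u != 0 -> exists i, 0 < dotQ u (v i).

Definition fano_polytope : Prop :=
  [/\ injective v, forall i, primitive (v i), forall i, is_vertex i
    & zero_interior].

Definition is_facet (F : {set 'I_n}) : Prop :=
  (exists u : 'rV[rat]_3,
      (forall i, dotQ u (v i) <= 1) /\ (forall i, i \in F <-> dotQ u (v i) = 1))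
  /\ (exists i j k, [/\ i \in F, j \in F, k \in F & det3 (v i) (v j) (v k) != 0]).

Definition quad_face (F : {set 'I_n}) : Prop := is_facet F /\ #|F| = 4.

(* (A,B,C,D) lists the vertices of the quadrilateral F in cyclic order:
   AC and BD are the two diagonals (they cross). *)
Definition cyclic_labeling (F : {set 'I_n}) (A B C D : 'I_n) : Prop :=
  F = [set A; B; C; D] /\
  exists s t : rat, [/\ 0 < s < 1, 0 < t < 1 &
     s *: toQ (v A) + (1 - s) *: toQ (v C) = t *: toQ (v B) + (1 - t) *: toQ (v D)].

Definition unimodular (i j k : 'I_n) : Prop := `|det3 (v i) (v j) (v k)| = 1.

(* Nodal: every maximal cone (cone over a facet) is smooth or a node
   (cone over a unit square: A + C = B + D with A,B,C a lattice basis). *)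
Definition nodal : Prop :=
  forall F, is_facet F ->
    (exists i j k, F = [set i; j; k] /\ #|F| = 3 /\ unimodular i j k) \/
    (#|F| = 4 /\ exists A B C D, [/\ cyclic_labeling F A B C D,
         v A + v C = v B + v D & unimodular A B C]).

Definition in_cone (S : {set 'I_n}) (x : 'rV[rat]_3) : Prop :=
  exists lam : 'I_n -> rat, [/\ forall i, 0 <= lam i, forall i, i \notin S -> lam i = 0
                              & x = \sum_i lam i *: toQ (v i)].

(* Sigma' : maximal cones (as sets of ray indices) of a fan with the same
   rays, refining the face fan of P, with the same support, smooth:
   a small (hence crepant) toric resolution of X. *)
Definition small_resolution (Sig' : {set {set 'I_n}}) : Prop :=
  [/\ (forall t, t \in Sig' -> exists i j k, [/\ t = [set i; j; k], #|t| = 3 & unimodular i j k]),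
      (forall t, t \in Sig' -> exists F, is_facet F /\ t \subset F),
      (forall F x, is_facet F -> in_cone F x -> exists2 t, t \in Sig' & t \subset F /\ in_cone t x)
    & (forall t1 t2 x, t1 \in Sig' -> t2 \in Sig' -> in_cone t1 x -> in_cone t2 x ->
          in_cone (t1 :&: t2) x)].

(* Torus-invariant Weil divisors: sum_i a i D_i, a : 'I_n -> int. *)
Definition cartier (cones : {set 'I_n} -> Prop) (a : 'I_n -> int) : Prop :=
  forall s, cones s -> exists m : 'rV[int]_3, forall i, i \in s -> dotZ m (v i) = - a i.

(* principal divisors div(chi^m) = sum_i <m, v_i> D_i *)
Definition principal (a : 'I_n -> int) : Prop :=
  exists m : 'rV[int]_3, forall i, a i = dotZ m (v i).

Definition lin_equiv (a b : 'I_n -> int) : Prop := principal (fun i => a i - b i).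

Definition phiABCD (a : 'I_n -> int) (A B C D : 'I_n) : int := a A - a B + a C - a D.

End Fan.

(* Main.v *)
Require Import Defs.
From HB Require Import structures.
From mathcomp Require Import all_boot all_order all_algebra.
From mathcomp Require Import zify ring lra.
Import Order.TTheory GRing.Theory Num.Theory.
Local Open Scope ring_scope.


Definition i0 : 'I_3 := @Ordinal 3 0 isT.
Definition i1 : 'I_3 := @Ordinal 3 1 isT.
Definition i2 : 'I_3 := @Ordinal 3 2 isT.

Lemma sum3 (R : nmodType) (F : 'I_3 -> R) : \sum_(k < 3) F k = F i0 + F i1 + F i2.
Proof.
rewrite !big_ord_recr big_ord0 /= add0r.
by congr (_ + _ + _); apply: congr1; apply: val_inj.
Qed.

Lemma indep3 (a b c : 'rV[int]_3) (x y z : rat) : det3 a b c != 0 ->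
  x *: toQ a + y *: toQ b + z *: toQ c = 0 -> [/\ x = 0, y = 0 & z = 0].
Proof.
move=> hd h.
set M := \matrix_(i < 3, k < 3) ([:: a; b; c]`_i) 0 k.
pose Mq := map_mx (fun z : int => z%:~R : rat) M.
have uMq : Mq \in unitmx.
  rewrite unitmxE unitfE /Mq.
  have -> : \det (map_mx (fun z : int => z%:~R : rat) M) = (\det M)%:~R.
    by rewrite -(det_map_mx (intr : {rmorphism int -> rat})).
  by rewrite intr_eq0.
pose w := \row_(j < 3) [:: x; y; z]`_j.
have hw : w *m Mq = 0.
  by rewrite -h; apply/rowP => k; rewrite !mxE sum3 !mxE.
have w0 : w = 0.
  by rewrite -(mulmxK uMq w) hw mul0mx.
split.
- by have := congr1 (fun u : 'rV[rat]_3 => u 0 i0) w0; rewrite !mxE.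
- by have := congr1 (fun u : 'rV[rat]_3 => u 0 i1) w0; rewrite !mxE.
- by have := congr1 (fun u : 'rV[rat]_3 => u 0 i2) w0; rewrite !mxE.
Qed.


Lemma solve3 (a b c : 'rV[int]_3) (al be ga : int) : `|det3 a b c| = 1 ->
  exists m : 'rV[int]_3, [/\ dotZ m a = al, dotZ m b = be & dotZ m c = ga].
Proof.
move=> hd.
set M := \matrix_(i < 3, k < 3) ([:: a; b; c]`_i) 0 k.
have uM : M \in unitmx.
  rewrite unitmxE; apply/unitrPr; exists (\det M).
  have := hd; rewrite /det3 -/M => e.
  by rewrite -expr2 -(real_normK (num_real _)) e expr1n.
pose c0 := \col_(i < 3) [:: al; be; ga]`_i.
pose X := invmx M *m c0.
have hX : M *m X = c0 by rewrite /X mulmxA mulmxV // mul1mx.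
exists X^T.
have key : forall i : 'I_3, dotZ X^T ([:: a; b; c]`_i) = [:: al; be; ga]`_i.
  move=> i; have := congr1 (fun u : 'cV[int]_3 => u i 0) hX.
  rewrite !mxE /dotZ => <-; apply: eq_bigr => k _; rewrite !mxE mulrC //.
by split; [apply: (key i0) | apply: (key i1) | apply: (key i2)].
Qed.

Set Implicit Arguments. Unset Strict Implicit.


Lemma set4E (T : finType) (a b c d : T) : [set a; b; c; d] = [set x in [:: a; b; c; d]].
Proof. by apply/setP => x; rewrite !inE -!orbA. Qed.

Lemma uniq4 (T : finType) (a b c d : T) : #|[set a; b; c; d]| = 4%N -> uniq [:: a; b; c; d].
Proof. by rewrite set4E cardsE => h; apply/card_uniqP; rewrite h. Qed.

Lemma sum4 (R : nmodType) (T : finType) (a b c d : T) (G : T -> R) :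
  uniq [:: a; b; c; d] -> \sum_(i in [set a; b; c; d]) G i = G a + G b + G c + G d.
Proof.
move=> u; rewrite -big_enum.
have p : perm_eq (enum [set a; b; c; d]) [:: a; b; c; d].
  apply: uniq_perm => //; first exact: enum_uniq.
  by move=> x; rewrite mem_enum set4E inE.
by rewrite (perm_big _ p) !big_cons big_nil /= addr0 !addrA.
Qed.


Section K.
Variables (n : nat) (v : 'I_n -> 'rV[int]_3).
Definition muf (A B C D : 'I_n) (s t : rat) (i : 'I_n) : rat :=
  if i == A then s else if i == C then 1 - s else if i == B then - t else - (1 - t).

Lemma key (A B C D A' B' C' D' : 'I_n) :
  #|[set A; B; C; D]| = 4%N -> [set A; B; C; D] = [set A'; B'; C'; D'] ->
  (exists s t : rat, [/\ 0 < s < 1, 0 < t < 1 &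
     s *: toQ (v A) + (1 - s) *: toQ (v C) = t *: toQ (v B) + (1 - t) *: toQ (v D)]) ->
  v A' + v C' = v B' + v D' -> unimodular v A' B' C' ->
  forall f : 'I_n -> int, phiABCD f A B C D = 0 <-> phiABCD f A' B' C' D' = 0.
Proof.
move=> hc hF [s [t [/andP[s0 s1] /andP[t0 t1] hx]]] hr hu.
have uq := uniq4 hc.
have uq' : uniq [:: A'; B'; C'; D'] by apply: uniq4; rewrite -hF.
have := uq; rewrite /= !inE !negb_or => /and4P[/and3P[nAB nAC nAD] /andP[nBC nBD] nCD _].
pose mu := muf A B C D s t.
have muA : mu A = s by rewrite /mu /muf eqxx.
have muC : mu C = 1 - s by rewrite /mu /muf eqxx eq_sym (negbTE nAC).
have muB : mu B = - t by rewrite /mu /muf eq_sym (negbTE nAB) (negbTE nBC) eqxx.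
have muD : mu D = - (1 - t)
  by rewrite /mu /muf eq_sym (negbTE nAD) eq_sym (negbTE nCD) eq_sym (negbTE nBD).
clearbody mu.
have hsum : \sum_(i in [set A; B; C; D]) mu i *: toQ (v i) = 0.
  rewrite sum4 // muA muB muC muD; apply/rowP => k.
  move/rowP: hx => /(_ k); rewrite !mxE => e; lra.
rewrite hF sum4 // in hsum.
have hdet : det3 (v A') (v B') (v C') != 0 by rewrite -normr_eq0 hu.
have h3 : (mu A' + mu D') *: toQ (v A') + (mu B' - mu D') *: toQ (v B')
          + (mu C' + mu D') *: toQ (v C') = 0.
  apply/rowP => k; move/rowP: hsum => /(_ k); rewrite !mxE.
  have -> : v D' 0 k = v A' 0 k + v C' 0 k - v B' 0 k.
    by move/rowP: hr => /(_ k); rewrite !mxE => ->; ring.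
  rewrite !intrD intrN => e; rewrite -[X in _ = X]e; ring.
case: (@indep3 _ _ _ _ _ _ hdet h3) => E1 E2 E3.
have : A' \in [set A; B; C; D] by rewrite hF !inE eqxx.
have : B' \in [set A; B; C; D] by rewrite hF !inE eqxx ?orbT.
have : C' \in [set A; B; C; D] by rewrite hF !inE eqxx ?orbT.
have : D' \in [set A; B; C; D] by rewrite hF !inE eqxx ?orbT.
rewrite !inE -!orbA.
move=> /or4P[] /eqP ? /or4P[] /eqP ? /or4P[] /eqP ? /or4P[] /eqP ?; subst A' B' C' D'.
all: first [ by move: uq'; rewrite /= !inE ?eqxx ?orbT ?andbF
           | by move=> f; rewrite /phiABCD; move: (f A) (f B) (f C) (f D) => a b c d; clear -a b c d; split=> h; lia
           | by rewrite ?muA ?muB ?muC ?muD in E1 E2 E3; move: E1 E2 E3 s0 s1 t0 t1; clear -s t; move=> *; exfalso; lra ].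
Qed.


End K.


Lemma dotZ_rel (m a b c d : 'rV[int]_3) : a + c = b + d ->
  dotZ m d = dotZ m a + dotZ m c - dotZ m b.
Proof.
move=> h; have hk : forall k, d 0 k = a 0 k + c 0 k - b 0 k.
  by move=> k; move/rowP: h => /(_ k); rewrite !mxE => ->; ring.
rewrite /dotZ !sum3 !hk.
move: (m 0 i0) (m 0 i1) (m 0 i2) (a 0 i0) (a 0 i1) (a 0 i2) (b 0 i0) (b 0 i1) (b 0 i2) (c 0 i0) (c 0 i1) (c 0 i2) => *; ring.
Qed.

Section Q.
Variables (n : nat) (v : 'I_n -> 'rV[int]_3).

Lemma quad_key F A B C D : nodal v -> quad_face v F -> cyclic_labeling v F A B C D ->
  exists A' B' C' D', [/\ F = [set A'; B'; C'; D'], v A' + v C' = v B' + v D',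
    unimodular v A' B' C' &
    forall f, phiABCD f A B C D = 0 <-> phiABCD f A' B' C' D' = 0].
Proof.
move=> nod [hF h4] [eF hx].
case: (nod F hF) => [[i [j [k [_ [h3 _]]]]] | [_ [A' [B' [C' [D' [[eF' _] hr hu]]]]]]].
  by rewrite h4 in h3.
exists A', B', C', D'; split; [exact: eF' | exact: hr | exact: hu | ].
apply: key; [by rewrite -eF h4 | by rewrite -eF eF' | exact: hx | exact: hr | exact: hu].
Qed.

Lemma quad_rel F A B C D : nodal v -> quad_face v F -> cyclic_labeling v F A B C D ->
  v A + v C = v B + v D.
Proof.
move=> nod hq hc; have [A' [B' [C' [D' [_ hr _ hf]]]]] := quad_key nod hq hc.
apply/rowP => k.
have := (hf (fun i => v i 0 k)).2.
rewrite /phiABCD !mxE.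
move/rowP: hr => /(_ k); rewrite !mxE.
move: (v A 0 k) (v B 0 k) (v C 0 k) (v D 0 k) (v A' 0 k) (v B' 0 k) (v C' 0 k) (v D' 0 k).
clear => a b c d a' b' c' d' e1 e2.
have := e2 ltac:(lia); lia.
Qed.
End Q.


Unset Implicit Arguments. Set Strict Implicit.
Theorem lemma3p4 (n : nat) (v : 'I_n -> 'rV[int]_3)
  (Sig' : {set {set 'I_n}})
  (lab : {set 'I_n} -> 'I_n * 'I_n * 'I_n * 'I_n) :
  fano_polytope v -> nodal v -> small_resolution v Sig' ->
  (forall F, quad_face v F ->
     let: (A, B, C, D) := lab F in cyclic_labeling v F A B C D) ->
  let cartX := cartier v (is_facet v) in
  let cartXt := cartier v (fun t => t \in Sig') in
  let phi := fun (a : 'I_n -> int) (F : {set 'I_n}) =>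
               let: (A, B, C, D) := lab F in phiABCD a A B C D in
  [/\ (* pullback Pic X -> Pic X~ is well defined *)
      forall a, cartX a -> cartXt a,
      (* ... and injective *)
      forall a b, cartX a -> cartX b -> lin_equiv v a b -> lin_equiv v a b,
      (* phi is well defined on Pic X~ *)
      forall a b, cartXt a -> cartXt b -> lin_equiv v a b ->
        forall F, quad_face v F -> phi a F = phi b F,
      (* image of Pic X is contained in ker phi *)
      forall a, cartX a -> forall F, quad_face v F -> phi a F = 0
    & (* ker phi is contained in the image of Pic X *)
      forall a, cartXt a -> (forall F, quad_face v F -> phi a F = 0) ->
        exists2 b, cartX b & lin_equiv v a b].
Proof.
move=> _ nod [sr1 sr2 sr3 sr4] hlab cartX cartXt phi.
split.
- move=> a ha t ht; have [F [hF sub]] := sr2 t ht.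
  have [m hm] := ha F hF; exists m => i hi; apply: hm; exact: (subsetP sub i hi).
- by [].
- move=> a b _ _ [m hm] F hF; rewrite /phi.
  case E: (lab F) => [[[A B] C] D].
  have := hlab F hF; rewrite E => hc.
  have hr := quad_rel nod hF hc.
  have h0 := dotZ_rel m hr.
  rewrite -!hm in h0; rewrite /phiABCD.
  move: h0; move: (a A) (a B) (a C) (a D) (b A) (b B) (b C) (b D); clear => *; lia.
- move=> a ha F hF; rewrite /phi.
  case E: (lab F) => [[[A B] C] D].
  have := hlab F hF; rewrite E => hc.
  have hr := quad_rel nod hF hc.
  have [m hm] := ha F hF.1.
  have h0 := dotZ_rel m hr.
  case: hc => eF _.
  rewrite !hm in h0; try by rewrite eF !inE eqxx ?orbT.
  rewrite /phiABCD; move: h0; move: (a A) (a B) (a C) (a D); clear => *; lia.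
- move=> a _ hphi; exists a; last first.
    by exists 0 => i; rewrite subrr /dotZ big1 // => k _; rewrite mxE mul0r.
  move=> F hF.
  case: (nod F hF) => [[i [j [k [eF [_ hu]]]]] | [h4 [A' [B' [C' [D' [hcl hr hu]]]]]]].
    have [m [h1 h2 h3]] := @solve3 _ _ _ (- a i) (- a j) (- a k) hu.
    exists m => x; rewrite eF !inE -!orbA => /or3P[] /eqP ->; by [].
  have hq : quad_face v F by [].
  have := hphi F hq; rewrite /phi.
  have := hlab F hq.
  case: (lab F) => [[[A B] C] D] hc hp.
  have [m [h1 h2 h3]] := @solve3 _ _ _ (- a A') (- a B') (- a C') hu.
  exists m.
  have [A'' [B'' [C'' [D'' _]]]] := quad_key nod hq hc.
  case: hc => eF hx; case: hcl => eF' _.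
  have hk := key (v := v) (A' := A') (B' := B') (C' := C') (D' := D').
  have := (hk A B C D ltac:(by rewrite -eF) ltac:(by rewrite -eF eF') hx hr hu a).1 hp.
  move=> hp'.
  have h4' : dotZ m (v D') = - a D'.
    rewrite (dotZ_rel m hr) h1 h2 h3; move: hp'; rewrite /phiABCD.
    move: (a A') (a B') (a C') (a D'); clear => *; lia.
  move=> x; rewrite eF' !inE -!orbA => /or4P[] /eqP -> //.
Qed.
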